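(* Let $A$ and $B$ be layouts. Then $\Phi_A=\Phi_B$ if and only if $\mathrm{coal}(A)=\mathrm{coal}(B)$.
   Context: A nested tuple is an integer or a finite tuple of nested tuples; its flattening is the tuple of its integer leaves left to right. A layout is $L=S:D$ with $S$ (positive integers) and $D$ (nonnegative integers) nested tuples of the same nesting pattern; its flattening is the flat layout $L^\flat=S^\flat:D^\flat$. For a flat layout $(s_1,\dots,s_m):(d_1,\dots,d_m)$ the layout function is $\Phi(x)=\sum_ix_id_i$ with $x_i=\lfloor x/(s_1\cdots s_{i-1})\rfloor\bmod s_i$ on $[0,s_1\cdots s_m)$; for a layout, $\Phi_L=\Phi_{L^\flat}$. For a flat layout, $\mathrm{squeeze}$ removes modes with $s_i=1$, and $\mathrm{coal}^\flat$ is obtained from the squeeze by repeatedly replacing adjacent modes $s_i,s_{i+1}:d_i,d_{i+1}$ with $d_{i+1}=s_id_i$ by $s_is_{i+1}:d_i$. For a layout $L$ with $\mathrm{coal}^\flat(L^\flat)=(s_1,\dots,s_m):(d_1,\dots,d_m)$: $\mathrm{coal}(L)$ is this flat (depth-one) layout if $m>1$, the depth-zero layout $s_1:d_1$ if $m=1$, and $1:0$ if $m=0$. *)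

(* Defs.v *)
From mathcomp Require Import all_boot.
Set Implicit Arguments. Unset Strict Implicit. Unset Printing Implicit Defensive.

Inductive ntup : Type :=
| Leaf of nat
| Node of list ntup.

Fixpoint flat (t : ntup) : seq nat :=
  match t with
  | Leaf n => [:: n]
  | Node l => (fix flatl (l : list ntup) : seq nat :=
                 match l with
                 | nil => [::]
                 | cons u l' => flat u ++ flatl l'
                 end) l
  end.

Fixpoint congruent (t u : ntup) : bool :=
  match t, u with
  | Leaf _, Leaf _ => true
  | Node l, Node l' =>
      (fix congl (l l' : list ntup) : bool :=
         match l, l' with
         | nil, nil => true
         | cons a l1, cons b l2 => congruent a b && congl l1 l2
         | _, _ => false
         end) l l'
  | _, _ => false
  end.

Definition layout := (ntup * ntup)%type.
Definition shape (L : layout) : ntup := L.1.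
Definition stride (L : layout) : ntup := L.2.

Definition is_layout (L : layout) : bool :=
  congruent (shape L) (stride L) && all (fun s => 0 < s) (flat (shape L)).

Definition flat_layout := (seq nat * seq nat)%type.

Definition flatten_layout (L : layout) : flat_layout :=
  (flat (shape L), flat (stride L)).

Definition fsize (F : flat_layout) : nat := \prod_(s <- F.1) s.

Definition fphi (F : flat_layout) (x : nat) : nat :=
  \sum_(i < size F.1)
     ((x %/ \prod_(j < i) nth 1 F.1 j) %% nth 1 F.1 i) * nth 0 F.2 i.

Definition lsize (L : layout) : nat := fsize (flatten_layout L).
Definition Phi (L : layout) : nat -> nat := fphi (flatten_layout L).

Definition same_layout_function (A B : layout) : Prop :=
  lsize A = lsize B /\ forall x, x < lsize A -> Phi A x = Phi B x.

Definition modes (F : flat_layout) : seq (nat * nat) := zip F.1 F.2.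

Definition squeeze (ms : seq (nat * nat)) : seq (nat * nat) :=
  [seq m <- ms | m.1 != 1].

(* Repeatedly replace adjacent modes (s_i,d_i),(s_{i+1},d_{i+1}) with
   d_{i+1} = s_i d_i by (s_i s_{i+1}, d_i); performed right to left
   (the result is independent of the order). *)
Fixpoint merge_modes (ms : seq (nat * nat)) : seq (nat * nat) :=
  match ms with
  | [::] => [::]
  | (s, d) :: rest =>
      match merge_modes rest with
      | (s', d') :: r' =>
          if d' == s * d then (s * s', d) :: r' else (s, d) :: (s', d') :: r'
      | [::] => [:: (s, d)]
      end
  end.

Definition coal_flat (F : flat_layout) : seq (nat * nat) :=
  merge_modes (squeeze (modes F)).

Definition coal (L : layout) : layout :=
  match coal_flat (flatten_layout L) with
  | [::] => (Leaf 1, Leaf 0)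
  | [:: (s, d)] => (Leaf s, Leaf d)
  | ms => (Node [seq Leaf m.1 | m <- ms], Node [seq Leaf m.2 | m <- ms])
  end.

(* Main.v *)
Require Import Defs.
From mathcomp Require Import all_boot.
From mathcomp Require Import zify.
Set Implicit Arguments. Unset Strict Implicit.

Fixpoint flatl (l : list ntup) : seq nat :=
  match l with nil => [::] | cons u l' => flat u ++ flatl l' end.
Fixpoint congl (l l' : list ntup) : bool :=
  match l, l' with
  | nil, nil => true
  | cons a l1, cons b l2 => congruent a b && congl l1 l2
  | _, _ => false
  end.

Lemma flat_node l : flat (Node l) = flatl l.
Proof. by []. Qed.
Lemma cong_node l l' : congruent (Node l) (Node l') = congl l l'.
Proof. by []. Qed.

Fixpoint congr_size (t : ntup) : forall u, congruent t u -> size (flat t) = size (flat u).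
Proof.
case: t => [n|l] [m|l'] //.
rewrite !flat_node cong_node.
elim: l l' => [|a l IHl] [|b l'] //= /andP [Hab Hl].
by rewrite !size_cat (congr_size a b Hab) (IHl l' Hl).
Qed.

Fixpoint mphi (ms : seq (nat * nat)) (x : nat) : nat :=
  if ms is (s, d) :: r then (x %% s) * d + mphi r (x %/ s) else 0.
Definition msize (ms : seq (nat * nat)) : nat := \prod_(m <- ms) m.1.

Lemma fphi_mphi (a b : seq nat) x : size a = size b -> fphi (a, b) x = mphi (zip a b) x.
Proof.
elim: a b x => [|s a IH] [|d b] x //=.
  by rewrite /fphi big_ord0.
case=> Hs.
rewrite -IH //.
rewrite /fphi /= big_ord_recl /= big_ord0 divn1; congr (_ + _).
apply: eq_bigr => i _.
by rewrite big_ord_recl /= divnMA.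
Qed.

Lemma fsize_msize (a b : seq nat) : size a = size b -> fsize (a, b) = msize (zip a b).
Proof.
move=> H; rewrite /fsize /msize -(big_map fst xpredT (fun s => s)).
have := unzip1_zip (s:=a) (t:=b); rewrite /unzip1 => -> //; by rewrite H.
Qed.

Lemma mphi0 ms : mphi ms 0 = 0.
Proof. elim: ms => [|[s d] r IH] //=; by rewrite mod0n div0n IH. Qed.

Lemma squeeze_phi ms x : mphi (squeeze ms) x = mphi ms x.
Proof.
elim: ms x => [|[s d] r IH] x //=.
case: eqP => /= [->|_]; last by rewrite IH.
by rewrite modn1 divn1 IH.
Qed.

Lemma squeeze_size ms : msize (squeeze ms) = msize ms.
Proof.
rewrite /msize /squeeze big_filter.
rewrite [RHS](bigID (fun m : nat * nat => m.1 != 1)) /=.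
by rewrite [X in _ * X]big1 ?muln1 // => m /negbNE /eqP.
Qed.

Lemma modnMsplit x s s' : 0 < s -> 0 < s' ->
  x %% (s * s') = x %% s + s * (x %/ s %% s').
Proof.
move=> Hs Hs'.
have E1 := divn_eq x s.
have E2 := divn_eq (x %/ s) s'.
have Hr := ltn_pmod x Hs.
have Hr2 := ltn_pmod (x %/ s) Hs'.
have Ex : x = (x %/ s %/ s') * (s * s') + (x %% s + s * (x %/ s %% s')).
  rewrite {1}E1 {1}E2. nia.
rewrite {1}Ex modnMDl modn_small //.
have := leq_mul (leqnn s) Hr2. rewrite mulnS. lia.
Qed.

Lemma msize_cons s d r : msize ((s, d) :: r) = s * msize r.
Proof. by rewrite /msize big_cons. Qed.
Lemma msize_nil : msize [::] = 1.
Proof. by rewrite /msize big_nil. Qed.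

Definition hd_ok (s d : nat) (r : seq (nat * nat)) : bool :=
  if r is (s', d') :: _ then d' != s * d else true.

Fixpoint coalesced (ms : seq (nat * nat)) : bool :=
  if ms is (s, d) :: r then hd_ok s d r && coalesced r else true.

Definition allgt1 (ms : seq (nat * nat)) := all (fun m => 1 < m.1) ms.

Lemma merge_props ms : allgt1 ms ->
  [/\ allgt1 (merge_modes ms), coalesced (merge_modes ms),
      msize (merge_modes ms) = msize ms &
      forall x, mphi (merge_modes ms) x = mphi ms x].
Proof.
elim: ms => [|[s d] r IH] //= /andP [Hs Hr].
have [Ha Hc Hsz Hp] := IH Hr.
case E: (merge_modes r) Ha Hc Hsz Hp => [|[s' d'] r'] Ha Hc Hsz Hp.
  split => //=; first by rewrite Hs.
    by rewrite !msize_cons -Hsz.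
  by move=> x; rewrite -Hp.
case: eqP => Hd.
  move: Ha Hc => /= /andP [Hs' Ha'] /andP [Hh Hc'].
  split.
  - apply/andP; split; [rewrite /=; nia | exact Ha'].
  - rewrite /= Hc' andbT. move: Hh; rewrite /hd_ok.
    case: r' {Ha' Hc' Hsz Hp E} => [|[s'' d''] r''] //.
    by rewrite Hd mulnA [s' * s]mulnC.
  - by rewrite !msize_cons -Hsz msize_cons mulnA.
  - move=> x /=. rewrite -Hp /= Hd modnMsplit; [|lia|lia].
    rewrite divnMA. nia.
split => //=.
- by rewrite Hs.
- apply/andP; split => //; rewrite /hd_ok; apply/eqP; exact Hd.
- by rewrite !msize_cons -Hsz msize_cons.
- by move=> x; rewrite -Hp.
Qed.

Lemma msize_pos ms : allgt1 ms -> 0 < msize ms.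
Proof.
elim: ms => [|[s d] r IH] /=; first by rewrite msize_nil.
move=> /andP [Hs Hr]; rewrite msize_cons muln_gt0 IH // andbT; lia.
Qed.

Lemma mphi_mul s d r y : 0 < s -> mphi ((s, d) :: r) (s * y) = mphi r y.
Proof. by move=> Hs /=; rewrite mulKn // [s * y]mulnC modnMl. Qed.

Lemma step s1 d r1 s2 r2 : 1 < s1 -> allgt1 r1 -> hd_ok s1 d r1 -> s1 < s2 ->
  s1 * msize r1 = s2 * msize r2 -> 0 < msize r2 ->
  mphi ((s1, d) :: r1) s1 = mphi ((s2, d) :: r2) s1 -> False.
Proof.
move=> H1 A1 h1 H12 Hsz P2.
case: r1 A1 h1 Hsz => [|[s' d'] r'] A1 h1 Hsz.
  rewrite msize_nil in Hsz. nia.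
move: A1 => /= /andP [Hs' A']; move: h1 => /= /eqP h1.
rewrite modnn divnn (ltnW H1) modn_small // divn_small // modn_small //.
rewrite divn_small // !mphi0. lia.
Qed.

Lemma uniq_coal ms1 ms2 : allgt1 ms1 -> allgt1 ms2 -> coalesced ms1 -> coalesced ms2 ->
  msize ms1 = msize ms2 -> (forall x, x < msize ms1 -> mphi ms1 x = mphi ms2 x) ->
  ms1 = ms2.
Proof.
elim: ms1 ms2 => [|[s1 d1] r1 IH] [|[s2 d2] r2] //.
- move=> _ /= /andP [H2 A2] _ _; rewrite msize_nil msize_cons => Hsz.
  have := msize_pos A2; nia.
- move=> /= /andP [H1 A1] _ _ _; rewrite msize_nil msize_cons => Hsz.
  have := msize_pos A1; nia.
move=> /= /andP [H1 A1] /andP [H2 A2] /andP [h1 C1] /andP [h2 C2].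
rewrite !msize_cons => Hsz Hph.
have P1 := msize_pos A1; have P2 := msize_pos A2.
have Ed : d1 = d2.
  have := Hph 1; rewrite /= !modn_small // !divn_small // !mphi0 !addn0 !mul1n.
  apply; nia.
subst d2.
have Es : s1 = s2.
  case: (ltngtP s1 s2) => // Hlt.
  - exfalso; apply: (step H1 A1 h1 Hlt Hsz P2); apply: Hph; nia.
  - exfalso; apply: (step H2 A2 h2 Hlt (esym Hsz) P1); apply/esym/Hph; nia.
subst s2.
have Hsz' : msize r1 = msize r2.
  by apply/eqP; rewrite -(eqn_pmul2l (ltnW H1)) Hsz.
rewrite (IH r2) // => y Hy.
rewrite -(@mphi_mul s1 d1 r1 y (ltnW H1)) -(@mphi_mul s1 d1 r2 y (ltnW H1)).
apply: Hph; rewrite ltn_pmul2l //; lia.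
Qed.

Lemma squeeze_gt1 (a b : seq nat) : all (fun s => 0 < s) a -> allgt1 (squeeze (zip a b)).
Proof.
elim: a b => [|s a IH] [|d b] //= /andP [Hs Ha].
case: eqP => /= H; first exact: IH.
rewrite IH // andbT; lia.
Qed.

Lemma coal_props (A : layout) : is_layout A ->
  let c := coal_flat (flatten_layout A) in
  [/\ allgt1 c, coalesced c, msize c = lsize A & forall x, mphi c x = Phi A x].
Proof.
move=> /andP [Hc Hpos] c.
have Hlen := congr_size Hc.
have Hg := squeeze_gt1 (flat (stride A)) Hpos.
have [Ha Hco Hsz Hp] := merge_props Hg.
split => //.
- by rewrite Hsz squeeze_size /lsize /flatten_layout fsize_msize.
- by move=> x; rewrite /c /coal_flat Hp squeeze_phi /Phi /flatten_layout fphi_mphi.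
Qed.

Definition coal_of (ms : seq (nat * nat)) : layout :=
  match ms with
  | [::] => (Leaf 1, Leaf 0)
  | [:: (s, d)] => (Leaf s, Leaf d)
  | ms => (Node [seq Leaf m.1 | m <- ms], Node [seq Leaf m.2 | m <- ms])
  end.

Lemma coalE L : coal L = coal_of (coal_flat (flatten_layout L)).
Proof. rewrite /coal /coal_of; case: (coal_flat _) => [|[s d] [|[s2 d2] r]] //. Qed.

Lemma fst_snd_eq (c1 c2 : seq (nat * nat)) :
  map fst c1 = map fst c2 -> map snd c1 = map snd c2 -> c1 = c2.
Proof.
move=> H1 H2; rewrite -(zip_unzip c1) -(zip_unzip c2).
by rewrite /unzip1 /unzip2 H1 H2.
Qed.

Lemma Leaf_inj : injective Leaf.
Proof. by move=> x y []. Qed.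

Lemma coal_of_inj c1 c2 : allgt1 c1 -> allgt1 c2 -> coal_of c1 = coal_of c2 -> c1 = c2.
Proof.
case: c1 => [|[s1 d1] [|[s1' d1'] r1]]; case: c2 => [|[s2 d2] [|[s2' d2'] r2]] //=.
- by move=> _ /andP [H _] [E _]; rewrite -E in H.
- by move=> /andP [H _] _ [E _]; rewrite E in H.
- by move=> _ _ [-> ->].
- move=> _ _ [-> -> E1 -> -> E2].
  congr (_ :: _ :: _); apply: fst_snd_eq.
  + by apply: (inj_map Leaf_inj); rewrite -!map_comp.
  + by apply: (inj_map Leaf_inj); rewrite -!map_comp.
Qed.

Theorem mainTheorem16 (A B : layout) :
  is_layout A -> is_layout B ->
  (same_layout_function A B <-> coal A = coal B).
Proof.
move=> HA HB.
have [Ga Ca Sa Pa] := coal_props HA.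
have [Gb Cb Sb Pb] := coal_props HB.
rewrite !coalE; split.
- move=> [Hsz Hph]; congr coal_of.
  apply: uniq_coal => //; first by rewrite Sa Sb.
  by move=> x Hx; rewrite Pa Pb; apply: Hph; rewrite -Sa.
- move=> /(coal_of_inj Ga Gb) E; split.
  + by rewrite -Sa -Sb E.
  + by move=> x _; rewrite -Pa -Pb E.
Qed.
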